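(* Let $k\ge1$ be an integer. If $\pi$ is a graphical sequence of length $n$ such that every graphical sequence $\pi'\le\pi$ (termwise) of length $n$ is forcibly $\chi(G)\le 2k$, then every graphical sequence $\pi'\le\pi$ of length $n$ is forcibly $a(G)\le k$. That is, $\mathrm{BM}(\chi(G)\le2k)\subseteq\mathrm{BM}(a(G)\le k)$.
   Context: Graphs are finite and simple; a graphical sequence is a nondecreasing integer sequence that is the degree sequence of some graph (a realization). A graphical sequence is forcibly $P$ if every realization has $P$. For a decreasing property $P$ (preserved under deleting edges), $\mathrm{BM}(P)$ is the set of graphical sequences $\pi$ such that every graphical sequence of the same length that is termwise at most $\pi$ is forcibly $P$. $\chi$ is the chromatic number; the vertex arboricity $a(G)$ is the minimum number of parts in a partition of $V(G)$ into sets each inducing a forest. *)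

(* Defs.v *)
From mathcomp Require Import all_boot all_order.
Set Implicit Arguments. Unset Strict Implicit. Unset Printing Implicit Defensive.

Definition simple_graph (n : nat) (g : rel 'I_n) : Prop :=
  symmetric g /\ irreflexive g.

Definition deg (n : nat) (g : rel 'I_n) (v : 'I_n) : nat := #|[set u | g v u]|.

Definition deg_seq (n : nat) (g : rel 'I_n) : seq nat :=
  sort leq [seq deg g v | v <- enum 'I_n].

Definition realizes (n : nat) (g : rel 'I_n) (pi : seq nat) : Prop :=
  simple_graph g /\ deg_seq g = pi.

Definition graphical (n : nat) (pi : seq nat) : Prop :=
  size pi = n /\ sorted leq pi /\ exists g : rel 'I_n, realizes g pi.

Definition forcibly (n : nat) (P : rel 'I_n -> Prop) (pi : seq nat) : Prop :=
  forall g : rel 'I_n, realizes g pi -> P g.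

Definition termwise_le (n : nat) (pi' pi : seq nat) : Prop :=
  forall i, i < n -> nth 0 pi' i <= nth 0 pi i.

Definition in_BM (n : nat) (P : rel 'I_n -> Prop) (pi : seq nat) : Prop :=
  graphical n pi /\
  forall pi' : seq nat, graphical n pi' -> termwise_le n pi' pi ->
    forcibly P pi'.

Definition chi_le (n : nat) (m : nat) (g : rel 'I_n) : Prop :=
  exists c : 'I_n -> 'I_m, forall u v, g u v -> c u != c v.

Definition induces_forest (n : nat) (g : rel 'I_n) (A : {set 'I_n}) : Prop :=
  forall s : seq 'I_n, 3 <= size s -> all (fun v => v \in A) s ->
    ~ ucycle g s.

Definition arboricity_le (n : nat) (m : nat) (g : rel 'I_n) : Prop :=
  exists c : 'I_n -> 'I_m,
    forall i : 'I_m, induces_forest g [set v | c v == i].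

(* Main.v *)
Require Import Defs.
From mathcomp Require Import all_boot all_order.
From mathcomp Require Import zify.
Set Implicit Arguments. Unset Strict Implicit.
Lemma pig (T : finType) k (N : {set T}) (c : T -> 'I_k) :
  #|N| = \sum_(i < k) #|[set u in N | c u == i]|.
Proof.
rewrite -sum1_card (partition_big c xpredT) //; apply: eq_bigr => i _.
by rewrite -sum1_card; apply: eq_bigl => u; rewrite inE.
Qed.

Lemma pig2 (T : finType) k (N : {set T}) (c : T -> 'I_k) :
  #|N| < 2 * k -> exists i, #|[set u in N | c u == i]| <= 1.
Proof.
move=> HN; apply/existsP; apply: contraT => /existsPn H.
have : \sum_(i < k) 2 <= #|N|.
  rewrite (pig N c); apply: leq_sum => i _; by rewrite ltnNge H.
by rewrite sum_nat_const card_ord mulnC leqNgt HN.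
Qed.

Lemma greedy n k (g : rel 'I_n) (rank : 'I_n -> nat) :
  0 < k ->
  (forall v, #|[set u | g v u && (rank u < rank v)]| < 2 * k) ->
  forall S : {set 'I_n}, exists c : 'I_n -> 'I_k,
    forall v, v \in S ->
      #|[set u in S | g v u && (rank u < rank v) && (c u == c v)]| <= 1.
Proof.
move=> k0 Hdeg S; move: {2}#|S| (leqnn #|S|) => m; elim: m S => [|m IH] S HS.
  exists (fun _ => Ordinal k0) => v; move: HS; rewrite leqn0 => /eqP/cards0_eq ->.
  by rewrite inE.
have [->|[x0 Hx0]] := set_0Vmem S.
  by exists (fun _ => Ordinal k0) => v; rewrite inE.
set m0 := [arg max_(x > x0 in S) rank x].
have [Hm0 Hmax] : m0 \in S /\ forall y, y \in S -> rank y <= rank m0.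
  by rewrite /m0; case: arg_maxnP.
have HS' : #|S :\ m0| <= m by move: HS; rewrite (cardsD1 m0) Hm0.
have [c Hc] := IH _ HS'.
pose N := [set u in S :\ m0 | g m0 u && (rank u < rank m0)].
have HN : #|N| < 2 * k.
  apply: leq_ltn_trans (Hdeg m0); apply: subset_leq_card; apply/subsetP => u.
  by rewrite !inE => /andP[_ ->].
have [i Hi] := pig2 c HN.
exists (fun x => if x == m0 then i else c x) => v Hv.
case: (eqVneq v m0) => [->|Hvm].
  apply: leq_trans Hi; apply: subset_leq_card; apply/subsetP => u.
  rewrite !inE /=; case: (eqVneq u m0) => [->|Hum]; first by rewrite ltnn !andbF.
  by case/and3P => -> /andP[-> ->] ->.
have Hv' : v \in S :\ m0 by rewrite !inE Hvm.
apply: leq_trans (Hc v Hv'); apply: subset_leq_card; apply/subsetP => u.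
rewrite !inE /= => /and3P[HuS /andP[Hg Hr] Hcol].
have Hum : u != m0.
  by apply/eqP => E; move: Hr; rewrite E ltnNge Hmax.
move: Hcol; case: ifP => [/eqP E|_ Hcol]; first by rewrite E eqxx in Hum.
by apply/and3P; split => //; apply/andP; split.
Qed.
Lemma max_in (T : eqType) (f : T -> nat) (s : seq T) :
  s != [::] -> exists2 v, v \in s & forall u, u \in s -> f u <= f v.
Proof.
elim: s => // a [|b s] IH _.
  by exists a => [|u]; rewrite ?inE // => /eqP ->.
have [v Hv Hmax] := IH isT.
case: (leqP (f a) (f v)) => H.
  exists v; first by rewrite inE Hv orbT.
  by move=> u; rewrite inE => /orP[/eqP ->|/Hmax].
exists a; first by rewrite inE eqxx.
move=> u; rewrite inE => /orP[/eqP ->//|/Hmax Hu].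
exact: leq_trans Hu (ltnW H).
Qed.

Lemma forest_of n k (g : rel 'I_n) (rank : 'I_n -> nat) (c : 'I_n -> 'I_k) :
  symmetric g -> injective rank ->
  (forall v, #|[set u | g v u && (rank u < rank v) && (c u == c v)]| <= 1) ->
  forall i, induces_forest g [set v | c v == i].
Proof.
move=> Hsym Hinj Hc i s Hsz Hall Hcyc.
have Hs0 : s != [::] by case: (s) Hsz.
have [v Hv Hmax] := max_in rank Hs0.
have Hcv : forall u, u \in s -> c u = i.
  by move=> u Hu; move/allP: Hall => /(_ u Hu); rewrite inE => /eqP.
case: (rot_to Hv) => r s' Hrot.
have Hcyc' : ucycle g (v :: s') by rewrite -Hrot rot_ucycle.
have Hsz' : 3 <= size (v :: s') by rewrite -Hrot size_rot.
have Hmem : forall u, u \in v :: s' -> u \in s by move=> u; rewrite -Hrot mem_rot.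
clear Hrot; case: s' Hcyc' Hsz' Hmem => [|a t] //= Hcyc' Hsz' Hmem.
case/lastP: t Hcyc' Hsz' Hmem => [|t b] //= Hcyc' Hsz' Hmem.
move: Hcyc'; rewrite /ucycle => /andP[]; rewrite /cycle /= rcons_path last_rcons.
move=> /and3P[Hva _ Hbv]. rewrite !inE mem_rcons !inE negb_or => /and3P[/andP[Hav Hbv'] Hab _].
have Ha : a \in s by apply: Hmem; rewrite !inE eqxx orbT.
have Hb : b \in s by apply: Hmem; rewrite !inE mem_rcons !inE eqxx !orbT.
have Hvs : v \in s by apply: Hmem; rewrite !inE eqxx.
have Hlt : forall u, u \in s -> v != u -> rank u < rank v.
  move=> u Hu Hvu; rewrite ltn_neqAle Hmax // andbT.
  by apply: contra Hvu => /eqP/Hinj ->.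
have : #|[set a; b]| <= 1.
  apply: leq_trans (Hc v); apply: subset_leq_card; apply/subsetP => u.
  rewrite !inE => /orP[]/eqP ->.
        by rewrite Hva (Hlt a Ha) ?(Hcv a Ha) ?(Hcv v Hvs) ?eqxx.
  move: Hbv'; rewrite negb_or => /andP[Hvb _].
  by rewrite Hsym Hbv (Hlt b Hb) ?(Hcv b Hb) ?(Hcv v Hvs) ?eqxx.
move: Hab; rewrite mem_rcons inE negb_or => /andP[Hab _].
by rewrite cards2 Hab.
Qed.

Lemma arb_of n k (g : rel 'I_n) : 0 < k -> simple_graph g ->
  #|[set v | 2 * k <= deg g v]| <= 2 * k -> arboricity_le k g.
Proof.
move=> k0 [Hsym Hirr] HH.
pose high v := 2 * k <= deg g v.
pose rank (v : 'I_n) := if high v then val v else n + val v.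
have Hinj : injective rank.
  move=> u v; rewrite /rank.
  case: (high u); case: (high v) => E; apply: val_inj => //=.
  - by move: (ltn_ord u); rewrite E ltnNge leq_addr.
  - by move: (ltn_ord v); rewrite -E ltnNge leq_addr.
  - by apply/eqP; rewrite -(eqn_add2l n) E.
have Hdeg : forall v, #|[set u | g v u && (rank u < rank v)]| < 2 * k.
  move=> v; case Hv: (high v).
  - have Hs : [set u | g v u && (rank u < rank v)] \subset [set u | high u] :\ v.
      apply/subsetP => u; rewrite !inE /rank (_ : high v = true) // => /andP[_].
      case: (high u) => Hr.
        by rewrite andbT; apply: contraTneq Hr => ->; rewrite ltnn.
      by move: Hr; rewrite ltnNge (leq_trans (ltnW (ltn_ord v))) // leq_addr.
    apply: leq_ltn_trans (subset_leq_card Hs) _.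
    have Hvin : v \in [set u | high u] by rewrite inE.
    by move: HH; rewrite (cardsD1 v) Hvin add1n.
  - apply: leq_ltn_trans (_ : #|[set u | g v u]| < 2 * k).
      by apply: subset_leq_card; apply/subsetP => u; rewrite !inE => /andP[].
    by rewrite ltnNge; move: Hv; rewrite /high /deg => ->.
have [c Hc] := greedy k0 Hdeg setT.
exists c; apply: forest_of Hsym Hinj _ => v.
apply: leq_trans (Hc v (in_setT v)); apply: subset_leq_card; apply/subsetP => u.
by rewrite !inE.
Qed.

Lemma cnt n (P : pred nat) : #|[set v : 'I_n | P v]| = count P (iota 0 n).
Proof.
rewrite -val_enum_ord count_map cardsE cardE /enum_mem size_filter count_filter.
by apply: eq_count => x; rewrite !inE /= andbT.
Qed.

Lemma cnt_ge n j : j <= n -> #|[set v : 'I_n | j <= v]| = n - j.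
Proof.
move=> Hj; rewrite cnt -{1}(subnKC Hj) iotaD count_cat add0n.
rewrite (@eq_in_count _ _ pred0); last first.
  by move=> x; rewrite mem_iota add0n /= ltnNge => /negbTE.
have -> : count pred0 (iota 0 j) = 0 by elim: (iota 0 j).
rewrite add0n (@eq_in_count _ _ predT) ?count_predT ?size_iota //.
by move=> x; rewrite mem_iota => /andP[->].
Qed.

Lemma count_deg n (g : rel 'I_n) (P : pred nat) :
  count P (deg_seq g) = #|[set v | P (deg g v)]|.
Proof.
rewrite /deg_seq.
have /permP -> : perm_eq (sort leq [seq deg g v | v <- enum 'I_n]) [seq deg g v | v <- enum 'I_n].
  by rewrite perm_sort.
rewrite count_map cardsE cardE /enum_mem size_filter count_filter.
by apply: eq_count => x; rewrite !inE /= andbT.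
Qed.

Theorem mainTheorem12 (k n : nat) (pi : seq nat) :
  1 <= k ->
  in_BM (@chi_le n (2 * k)) pi ->
  in_BM (@arboricity_le n k) pi.
Proof.
move=> k1 [Hgr Hchi]; split => // pi' Hgr' Hle g Hreal.
apply: arb_of k1 Hreal.1 _.
have [Hsz [Hsort _]] := Hgr.
case: (leqP n (2 * k)) => Hn.
  by apply: leq_trans (max_card _) _; rewrite card_ord.
set j := n - (2 * k).+1.
have Hjn : j < n by rewrite /j; lia.
have Hnth : forall i, j <= i -> i < n -> nth 0 pi j <= nth 0 pi i.
  move=> i Hji Hin; apply: (sorted_leq_nth leq_trans leqnn) => //; rewrite inE Hsz //.
case: (ltnP (nth 0 pi j) (2 * k)) => Hpj.
  rewrite -(count_deg g (leq (2 * k))) Hreal.2 -(cat_take_drop j.+1 pi') count_cat.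
  have -> : count (leq (2 * k)) (take j.+1 pi') = 0.
    apply/eqP; rewrite -leqn0 leqNgt -has_count; apply/negP => /(has_nthP 0) [i Hi Hpi].
    move: Hi; rewrite size_take_min leq_min Hgr'.1 => /andP[Hij Hin].
    move: Hpi; rewrite nth_take // => Hpi.
    have := leq_trans Hpi (Hle i Hin).
    have := Hsort; have Hle2 : nth 0 pi i <= nth 0 pi j.
      apply: (sorted_leq_nth leq_trans leqnn) => //; rewrite ?inE Hsz //.
    by move=> _ H; move: (leq_trans H Hle2); rewrite leqNgt Hpj.
  rewrite add0n; apply: leq_trans (count_size _ _) _; rewrite size_drop Hgr'.1 /j; lia.
exfalso.
pose K : rel 'I_n := fun u v => (u != v) && (j <= u) && (j <= v).
have HK : simple_graph K.
  split.
    by move=> u v; rewrite /K eq_sym; case: (j <= u); case: (j <= v); rewrite ?andbF ?andbT.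
  by move=> u; rewrite /K eqxx.
have HC : #|[set v : 'I_n | j <= v]| = (2 * k).+1 by rewrite cnt_ge ?(ltnW Hjn) // /j; lia.
have Hdeg : forall v, deg K v = if j <= v then 2 * k else 0.
  move=> v; rewrite /deg; case: ifP => Hv.
    have -> : [set u | K v u] = [set u : 'I_n | j <= u] :\ v.
      by apply/setP => u; rewrite !inE /K Hv andbT eq_sym.
    have Hvin : v \in [set u : 'I_n | j <= u] by rewrite inE.
    by move: HC; rewrite (cardsD1 v) Hvin add1n => -[].
  have -> : [set u | K v u] = set0.
    by apply/setP => u; rewrite !inE /K Hv andbF.
  by rewrite cards0.
pose h i := if j <= i then 2 * k else 0.
have HdsK : deg_seq K = [seq h i | i <- iota 0 n].
  rewrite /deg_seq (eq_map Hdeg) sorted_sort; first by rewrite -val_enum_ord -map_comp.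
    exact: leq_trans.
  have Hs : sorted (relpre val leq) (enum 'I_n) by rewrite -sorted_map val_enum_ord iota_sorted.
  rewrite sorted_map; apply: (sub_sorted _ Hs) => x y /= Hxy.
  case: ifP => Hx; last by [].
  by rewrite (leq_trans Hx Hxy).
have Hgr'' : graphical n (deg_seq K).
  split; first by rewrite HdsK size_map size_iota.
  split; first exact: (sort_sorted leq_total).
  by exists K.
have Hle'' : termwise_le n (deg_seq K) pi.
  move=> i Hi; rewrite HdsK (nth_map 0) ?size_iota // nth_iota // add0n /h.
  case: ifP => // Hji; exact: leq_trans Hpj (Hnth i Hji Hi).
have [c Hc] := Hchi _ Hgr'' Hle'' K (conj HK erefl).
have Hinj : {in [set v : 'I_n | j <= v] &, injective c}.
  move=> u v; rewrite !inE => Hu Hv E; apply/eqP; apply: contraT => Huv.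
  by have := Hc u v; rewrite /K Huv Hu Hv E eqxx => /(_ isT).
have := max_card [set c x | x in [set v : 'I_n | j <= v]].
by rewrite card_in_imset // HC card_ord ltnn.
Qed.
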